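(* Let $r\ge 1$ and let $M_s=(V_s=\{s_1,\dots,s_r\},w_s)$ and $M_t=(V_t=\{t_1,\dots,t_r\},w_t)$ be metric spaces. Define $M_{st}=(\{1,\dots,r\},l)$ with $l(i,j)\coloneqq w_s(s_i,s_j)+w_t(t_i,t_j)$. Let $T^*_s$ be a minimum-weight TSP tour in $M_s$ and $T^*_t$ a minimum-weight TSP tour in $M_t$. Then there exists a TSP tour $T$ in $M_{st}$ with $$l(T)\le 2\sqrt{r-1}\,\big(w_s(T^*_s)+w_t(T^*_t)\big).$$
   Context: A TSP tour in a finite metric space on a point set $P$ is a cyclic ordering $v_1v_2\dots v_k$ of all points of $P$ (each exactly once); its weight is the sum of the distances $d(v_1,v_2)+d(v_2,v_3)+\dots+d(v_{k-1},v_k)+d(v_k,v_1)$. *)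

(* Defs.v *)
From HB Require Import structures.
From mathcomp Require Import all_boot all_order all_algebra all_fingroup.
From mathcomp Require Import reals.
Set Implicit Arguments. Unset Strict Implicit. Unset Printing Implicit Defensive.
Import Order.TTheory GRing.Theory Num.Theory.
Local Open Scope ring_scope.

(* A finite metric space on r points, the points being indexed by 'I_r
   (the points s_1..s_r are pairwise distinct, so distance 0 iff same index). *)
Definition is_metric (R : realType) (r : nat) (d : 'I_r -> 'I_r -> R) : Prop :=
  [/\ forall x y, 0 <= d x y,
      forall x y, (d x y == 0) = (x == y),
      forall x y, d x y = d y x &
      forall x y z, d x z <= d x y + d y z].

(* A TSP tour v_1 ... v_r is a cyclic ordering of all points, represented by a
   permutation p (v_{k+1} = p k); its weight is the sum of the distances between
   consecutive points, including the closing edge d(v_r, v_1). *)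
Definition tour_weight (R : realType) (r : nat) (d : 'I_r -> 'I_r -> R)
    (p : 'S_r) : R :=
  \sum_(k < r) d (p k) (p (ordS k)).

Definition is_min_tour (R : realType) (r : nat) (d : 'I_r -> 'I_r -> R)
    (p : 'S_r) : Prop :=
  forall q : 'S_r, tour_weight d p <= tour_weight d q.

(* Main.v *)
Require Import Defs.
From HB Require Import structures.
From mathcomp Require Import all_boot all_order all_algebra all_fingroup.
From mathcomp Require Import reals.
From mathcomp Require Import zify ring lra.
Set Implicit Arguments. Unset Strict Implicit.
Import Order.TTheory GRing.Theory Num.Theory.
Local Open Scope ring_scope.

Lemma sqrt_ge (R : realType) (c x : R) : 0 <= c -> c ^+ 2 <= x -> c <= Num.sqrt x.
Proof.
move=> c0 cx; rewrite -(ger0_norm c0) -sqrtr_sqr; exact: ler_wsqrtr.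
Qed.

Section Gen.
Variables (R : realType) (n : nat) (d : 'I_n.+1 -> 'I_n.+1 -> R) (p : 'S_n.+1).
Hypothesis hd : is_metric d.

Definition ed (i : nat) := d (p (inord i)) (p (ordS (inord i))).
Definition Fd (i : nat) := \sum_(0 <= j < i) ed j.

Lemma d0 x : d x x = 0.
Proof. by case: hd => _ h _ _; apply/eqP; rewrite h. Qed.
Lemma dge0 x y : 0 <= d x y.
Proof. by case: hd. Qed.
Lemma dsym x y : d x y = d y x.
Proof. by case: hd. Qed.
Lemma dtri x y z : d x z <= d x y + d y z.
Proof. by case: hd. Qed.

Lemma ed_ge0 i : 0 <= ed i.
Proof. exact: dge0. Qed.

Lemma tw_F : tour_weight d p = Fd n.+1.
Proof.
rewrite /tour_weight /Fd big_mkord; apply: eq_bigr => i _; by rewrite /ed inord_val.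
Qed.

Lemma ordS_inord i : (i < n)%N -> ordS (inord i : 'I_n.+1) = inord i.+1.
Proof.
move=> hi; apply: val_inj => /=; rewrite inordK; last by lia.
rewrite inordK; last by lia.
by rewrite modn_small //; lia.
Qed.

Lemma ordS_max : ordS (inord n : 'I_n.+1) = inord 0.
Proof.
apply: val_inj => /=; rewrite inordK // inordK // modnn //.
Qed.

Lemma FdS i : Fd i.+1 = Fd i + ed i.
Proof. by rewrite /Fd big_nat_recr. Qed.

Lemma Fd_mono i j : (i <= j)%N -> Fd i <= Fd j.
Proof.
move=> /subnKC <-; elim: (j - i)%N => [|k IH]; first by rewrite addn0.
rewrite addnS FdS; apply: le_trans IH _; rewrite lerDl; exact: ed_ge0.
Qed.

Lemma Fd_ge0 i : 0 <= Fd i.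
Proof. by have := @Fd_mono 0 i (leq0n i); rewrite /Fd big_geq. Qed.

Lemma Wfwd_nat i j : (i <= j)%N -> (j <= n)%N ->
  d (p (inord i)) (p (inord j)) <= Fd j - Fd i.
Proof.
move=> hij; elim: j hij => [|j IH].
  by rewrite leqn0 => /eqP -> _; rewrite d0 subrr.
rewrite leq_eqVlt => /orP [/eqP <- _|hij hj]; first by rewrite d0 subrr.
apply: le_trans (dtri _ (p (inord j)) _) _.
rewrite FdS (addrC (Fd j)) -addrA addrC lerD //; first by apply: IH => //; lia.
by rewrite /ed ordS_inord.
Qed.

Definition pos (u : 'I_n.+1) : nat := val ((p^-1)%g u).
Lemma pos_lt u : (pos u <= n)%N.
Proof. by have := ltn_ord ((p^-1)%g u). Qed.
Lemma posK u : p (inord (pos u)) = u.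
Proof. by rewrite /pos inord_val permKV. Qed.

Lemma Wfwd u v : (pos u <= pos v)%N -> d u v <= Fd (pos v) - Fd (pos u).
Proof.
move=> h; rewrite -{1}(posK u) -{1}(posK v); apply: Wfwd_nat => //; exact: pos_lt.
Qed.

Lemma Wall u v : d u v <= Fd n.+1 - Fd (pos u) + Fd (pos v).
Proof.
case: (leqP (pos u) (pos v)) => h.
  apply: le_trans (Wfwd h) _.
  have := Fd_ge0 n.+1; lra.
rewrite -(posK u) -(posK v).
apply: le_trans (dtri _ (p (inord n)) _) _.
apply: le_trans (lerD (Wfwd_nat (pos_lt u) (leqnn n)) (dtri _ (p (inord 0)) _)) _.
have h1 : d (p (inord n)) (p (inord 0)) = ed n by rewrite /ed ordS_max.
have h2 := Wfwd_nat (leq0n (pos v)) (pos_lt v).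
have h0 : Fd 0 = 0 by rewrite /Fd big_geq.
rewrite h0 posK in h2; rewrite h1 FdS !posK; lra.
Qed.

Lemma Lhalf u v : d u v <= Fd n.+1 / 2.
Proof.
wlog h : u v / (pos u <= pos v)%N.
  move=> W; case: (leqP (pos u) (pos v)) => h; first exact: W.
  by rewrite dsym; apply: W; exact: ltnW.
have := Wfwd h; have := Wall v u; rewrite dsym; lra.
Qed.


Variable m : nat.
Hypothesis m0 : (0 < m)%N.
Definition Pb (c : nat) := \sum_(j < n.+1 | (j %/ m)%N == c) ed j.

Lemma Pb_ge0 c : 0 <= Pb c.
Proof. by apply: sumr_ge0 => j _; exact: ed_ge0. Qed.

Lemma block u v : (pos u %/ m)%N = (pos v %/ m)%N -> d u v <= Pb ((pos u %/ m)%N).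
Proof.
wlog h : u v / (pos u <= pos v)%N.
  move=> W; case: (leqP (pos u) (pos v)) => h; first exact: W.
  by move=> e; rewrite dsym e; apply: W; [exact: ltnW|].
move=> e; apply: le_trans (Wfwd h) _.
set c := (pos u %/ m)%N.
have E : Fd (pos v) - Fd (pos u) = \sum_(pos u <= j < pos v | (j %/ m)%N == c) ed j.
  rewrite /Fd (big_cat_nat (leq0n (pos u)) h) /= addrC addrK.
  rewrite [RHS]big_nat_cond [LHS]big_nat_cond; apply: eq_bigl => j.
  rewrite andbT; case/boolP: (pos u <= j < pos v)%N => //= /andP[h1 h2].
  apply/esym/eqP; apply/eqP; rewrite eqn_leq; apply/andP; split.
    by rewrite /c e; apply: leq_div2r; exact: ltnW.
  exact: leq_div2r.
rewrite E /Pb -(big_mkord (fun j => (j %/ m)%N == c) ed).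
rewrite (big_cat_nat (leq0n (pos u))) /=; last by have := pos_lt v; lia.
rewrite [X in _ <= _ + X](big_cat_nat h) /=; last by have := pos_lt v; lia.
rewrite addrCA lerDl; apply: addr_ge0; apply: sumr_ge0 => j _; exact: ed_ge0.
Qed.

Lemma card_blk c : (#|[set i : 'I_n.+1 | (i %/ m)%N == c]| <= m)%N.
Proof.
set A := [set i : 'I_n.+1 | (i %/ m)%N == c].
pose f := fun i : 'I_n.+1 => (Ordinal (ltn_pmod i m0)).
rewrite -(card_in_imset (f := f)); first by rewrite -[X in (_ <= X)%N](card_ord m) max_card.
move=> i j; rewrite !inE => /eqP hi /eqP hj /(congr1 val) /= hm.
by apply: val_inj => /=; rewrite (divn_eq i m) (divn_eq j m) hi hj hm.
Qed.

Lemma sumPb : \sum_(v : 'I_n.+1) Pb ((pos v %/ m)%N) <= (Fd n.+1) *+ m.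
Proof.
rewrite (reindex_inj (@perm_inj _ p)) /=.
have -> : \sum_(i : 'I_n.+1) Pb ((pos (p i) %/ m)%N) = \sum_(i : 'I_n.+1) Pb ((i %/ m)%N).
  by apply: eq_bigr => i _; rewrite /pos permK.
rewrite /Pb.
have -> : \sum_(i : 'I_n.+1) \sum_(j < n.+1 | (j %/ m)%N == (i %/ m)%N) ed j =
   \sum_(j < n.+1) \sum_(i in [set i : 'I_n.+1 | (i %/ m)%N == (j %/ m)%N]) ed j.
  rewrite (exchange_big_dep xpredT) //=.
  apply: eq_bigr => j _; apply: eq_bigl => i; by rewrite inE eq_sym.
rewrite /Fd big_mkord -sumrMnl; apply: ler_sum => j _.
rewrite sumr_const; apply: ler_wpMn2l; [exact: ed_ge0| exact: card_blk].
Qed.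

End Gen.

Lemma tw_seq (R : realType) n (d : 'I_n.+1 -> 'I_n.+1 -> R) (s : seq 'I_n.+1)
  (T : 'S_n.+1) (TE : forall i, T i = nth ord0 s i) :
  tour_weight d T = \sum_(0 <= i < n) d (nth ord0 s i) (nth ord0 s i.+1)
                    + d (nth ord0 s n) (nth ord0 s 0).
Proof.
rewrite /tour_weight big_ord_recr /= big_mkord; congr (_ + _).
  apply: eq_bigr => i _; rewrite !TE /=; congr (d _ (nth _ _ _)).
  by rewrite modn_small // ltnS.
by rewrite !TE /= modnn.
Qed.

Lemma key_prop (N b1 b2 t1 t2 : nat) : (t1 < N)%N -> (t2 < N)%N ->
  (b1 * N + t1 <= b2 * N + t2)%N -> (b1 <= b2)%N /\ (b1 = b2 -> t1 <= t2)%N.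
Proof.
move=> h1 h2 h; split; last by move=> e; rewrite e leq_add2l in h.
rewrite leqNgt; apply/negP => lt.
have : (b2.+1 * N <= b1 * N)%N by rewrite leq_mul2r lt orbT.
rewrite mulSn; lia.
Qed.

Lemma large (R : realType) n k (k3 : (3 <= k)%N) (nk : (n < k.+1 * k.+1)%N)
    (ws wt : 'I_n.+1 -> 'I_n.+1 -> R)
    (hws : is_metric ws) (hwt : is_metric wt) (Ts Tt : 'S_n.+1) :
  exists T : 'S_n.+1,
    tour_weight (fun i j => ws i j + wt i j) T
      <= 2 * k%:R * (tour_weight ws Ts + tour_weight wt Tt).
Proof.
have k0 : (0 < k)%N by lia.
pose N := n.+1.
pose blk u := (pos Ts u %/ k)%N.
pose key u := (blk u * N + pos Tt u)%N.
pose leK := fun u v : 'I_N => (key u <= key v)%N.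
pose s := sort leK (enum 'I_N).
have ss : size s = N by rewrite size_sort size_enum_ord.
have us : uniq s by rewrite sort_uniq enum_uniq.
pose f := fun i : 'I_N => nth ord0 s i.
have finj : injective f.
  move=> i j /eqP; rewrite nth_uniq ?ss // => /eqP; exact: val_inj.
pose T := perm finj. exists T.
have TE : forall i, T i = nth ord0 s i by move=> i; rewrite permE.
have sorted_s : sorted leK s by apply: sort_sorted => u v; exact: leq_total.
pose sg i := nth ord0 s i.
have cons : forall i, (i < n)%N -> (blk (sg i) <= blk (sg i.+1))%N /\
     (blk (sg i) = blk (sg i.+1) -> pos Tt (sg i) <= pos Tt (sg i.+1))%N.
  move=> i hi; apply: (@key_prop N); try exact: (pos_lt Tt).
  have tr : transitive leK by move=> ? ? ?; exact: leq_trans.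
  have rf : reflexive leK by move=> ?; exact: leqnn.
  have := sorted_leq_nth tr rf ord0 sorted_s; move=> /(_ i i.+1).
  rewrite !inE ss => H; apply: H; rewrite /N; lia.
set a := tour_weight ws Ts; set b := tour_weight wt Tt.
have a0 : 0 <= a by rewrite /a tw_F; exact: Fd_ge0.
have b0 : 0 <= b by rewrite /b tw_F; exact: Fd_ge0.
pose q := (n %/ k)%N.
have qk : (q <= k.+2)%N.
  rewrite /q; have : (n <= k * k.+2)%N by lia.
  move=> /(leq_div2r k); rewrite mulKn //.
have blk_le : forall u, (blk u <= q)%N.
  by move=> u; apply: leq_div2r; exact: pos_lt.
pose be i : R := (blk (sg i))%:R.
have be0 : 0 <= be 0 by rewrite /be ler0n.
have ben : be n <= k.+2%:R by rewrite /be ler_nat; exact: leq_trans (blk_le _) qk.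
have ben0 : be 0 <= be n.
  rewrite /be ler_nat.
  have : forall j, (j <= n)%N -> (blk (sg 0) <= blk (sg j))%N.
    elim=> [//|j IH] hj; apply: leq_trans (IH (ltnW hj)) _; exact: (cons j hj).1.
  by apply.
have tpart : tour_weight wt T <= b + b * (be n - be 0).
  rewrite (tw_seq wt TE).
  pose Phi i := Fd wt Tt (pos Tt (sg i)) + b * be i.
  have step : forall i, (0 <= i < n)%N ->
      wt (sg i) (sg i.+1) <= Phi i.+1 - Phi i.
    move=> i /andP[_ hi]; have [c1 c2] := cons i hi.
    rewrite /Phi /be.
    move: c1; rewrite leq_eqVlt => /orP [/eqP e|lt].
      have := Wfwd hwt (c2 e); rewrite e; lra.
    have := Wall Tt hwt (sg i) (sg i.+1); rewrite -tw_F -/b.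
    have : 1 <= (blk (sg i.+1))%:R - (blk (sg i))%:R :> R.
      move: (lt); rewrite -(ler_nat R) -natr1; lra.
    nra.
  apply: le_trans (lerD (ler_sum_nat step) (Wall Tt hwt (sg n) (sg 0))) _.
  rewrite telescope_sumr // /Phi -tw_F -/b; lra.
have spart : tour_weight ws T <= a *+ k + a / 2 * (be n - be 0) + a / 2.
  rewrite (tw_seq ws TE).
  pose Psi i := a / 2 * be i.
  have step : forall i, (0 <= i < n)%N ->
      ws (sg i) (sg i.+1) <= Pb ws Ts k (blk (sg i)) + (Psi i.+1 - Psi i).
    move=> i /andP[_ hi]; have [c1 _] := cons i hi.
    rewrite /Psi /be.
    move: c1; rewrite leq_eqVlt => /orP [/eqP e|lt].
      rewrite e subrr addr0 -e; by have := block hws k0 e.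
    have := Lhalf Ts hws (sg i) (sg i.+1); rewrite -tw_F -/a.
    have := @Pb_ge0 R n ws Ts hws k (blk (sg i)).
    have : 1 <= (blk (sg i.+1))%:R - (blk (sg i))%:R :> R.
      move: (lt); rewrite -(ler_nat R) -natr1; lra.
    rewrite -mulrBr; nra.
  apply: le_trans (lerD (ler_sum_nat step) (Lhalf Ts hws (sg n) (sg 0))) _.
  rewrite big_split /= telescope_sumr // -tw_F -/a /Psi.
  have PS : \sum_(0 <= i < n) Pb ws Ts k (blk (sg i)) <= a *+ k.
    apply: le_trans (_ : \sum_(0 <= i < N) Pb ws Ts k (blk (sg i)) <= _).
      rewrite /N big_nat_recr //= lerDl; exact: Pb_ge0.
    rewrite big_mkord.
    have -> : \sum_(i < N) Pb ws Ts k (blk (sg i)) = \sum_(i < N) Pb ws Ts k (blk (T i)).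
      by apply: eq_bigr => i _; rewrite TE.
    have -> : \sum_(i < N) Pb ws Ts k (blk (T i)) = \sum_(v < N) Pb ws Ts k (blk v).
      by rewrite [RHS](reindex_inj (@perm_inj _ T)).
    rewrite /a tw_F; exact: sumPb.
  lra.
have -> : tour_weight (fun i j => ws i j + wt i j) T = tour_weight ws T + tour_weight wt T.
  by rewrite /tour_weight big_split.
have kk : (3:R) <= k%:R by rewrite (ler_nat R 3).
rewrite -mulr_natr in spart.
move: ben; rewrite -!natr1 => ben.
nra.
Qed.

Lemma isqrt n : exists k, (k * k <= n < k.+1 * k.+1)%N.
Proof.
elim: n => [|n [k /andP[h1 h2]]]; first by exists 0%N.
case: (ltnP n.+1 (k.+1 * k.+1)) => h.
  by exists k; rewrite h andbT; lia.
exists k.+1; apply/andP; split => //; lia.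
Qed.

Unset Implicit Arguments. Set Strict Implicit.
Theorem lemma3 (R : realType) (r : nat) (hr : (1 <= r)%N)
    (ws wt : 'I_r -> 'I_r -> R)
    (hws : is_metric ws) (hwt : is_metric wt)
    (Ts Tt : 'S_r) (hTs : is_min_tour ws Ts) (hTt : is_min_tour wt Tt) :
  exists T : 'S_r,
    tour_weight (fun i j => ws i j + wt i j) T
      <= 2 * Num.sqrt ((r - 1)%:R) * (tour_weight ws Ts + tour_weight wt Tt).
Proof.
case: r hr ws wt hws hwt Ts Tt hTs hTt => // n _ ws wt hws hwt Ts Tt _ _.
rewrite subn1 /=.
have a0 : 0 <= tour_weight ws Ts by rewrite tw_F; exact: Fd_ge0.
have b0 : 0 <= tour_weight wt Tt by rewrite tw_F; exact: Fd_ge0.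
case: n ws wt hws hwt Ts Tt a0 b0 => [|n] ws wt hws hwt Ts Tt a0 b0.
  exists Ts; rewrite sqrtr0 mulr0 mul0r /tour_weight big1 // => i _.
  by rewrite !ord1 (d0 hws) (d0 hwt) addr0.
have s1 : 1 <= Num.sqrt (n.+1%:R : R).
  by apply: sqrt_ge => //; rewrite expr1n (ler_nat R 1).
case: (ltnP n 8) => hn.
  exists Ts.
  have -> : tour_weight (fun i j => ws i j + wt i j) Ts = tour_weight ws Ts + tour_weight wt Ts.
    by rewrite /tour_weight big_split.
  have tb : tour_weight wt Ts <= (n.+2%:R) * (tour_weight wt Tt / 2).
    apply: le_trans (_ : \sum_(i < n.+2) (tour_weight wt Tt / 2) <= _).
      by apply: ler_sum => i _; rewrite tw_F; apply: Lhalf.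
    by rewrite sumr_const card_ord mulr_natl.
  have s2 : n.+2%:R / 4 <= Num.sqrt (n.+1%:R : R).
    apply: sqrt_ge; first by apply: divr_ge0 => //.
    have : (n.+1 <= 8)%N by lia.
    rewrite -(ler_nat R) => h8.
    have h1 : (1:R) <= n.+1%:R by rewrite (ler_nat R 1).
    rewrite -natr1; nra.
  nra.
have [k /andP[h1 h2]] := isqrt n.+1.
have k3 : (3 <= k)%N by nia.
have [T HT] := large k3 h2 hws hwt Ts Tt.
exists T; apply: (le_trans HT); apply: ler_wpM2r; first exact: addr_ge0.
apply: ler_wpM2l => //; apply: sqrt_ge => //.
by rewrite expr2 -natrM ler_nat.
Qed.
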